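(* $Cond_{AB}$ is not universal: there is an epistemic space $\mathbb{S}$ that is identifiable in the limit but is not identifiable in the limit by $Cond_{AB}$.
   Context: An epistemic space is a pair $\mathbb{S}=(S,\mathcal{O})$ where $S$ is a non-empty, at most countable set of worlds and $\mathcal{O}\subseteq\mathcal{P}(S)$ is a set of observables. A data stream is an infinite sequence $\vec O=(O_0,O_1,\ldots)$ of elements of $\mathcal{O}$; $\vec O[n]=(O_0,\ldots,O_{n-1})$; it is sound for $s$ if $s\in O_n$ for all $n$ and complete for $s$ if every $O\in\mathcal{O}$ with $s\in O$ occurs in it. $\mathbb{S}$ is identifiable in the limit if some learner (map from finite sequences to subsets of $S$) outputs $\{s\}$ on all sufficiently long initial segments of every stream sound and complete for $s$, for every $s\in S$. A plausibility space is $\mathbb{B}=(S,\mathcal{O},\preceq)$, $\preceq$ a total preorder on $S$; $\min_\preceq X$ is the set of $\preceq$-minimal elements of $X$. Conditioning: $Cond_1(\mathbb{B},p)=(S\cap p,\mathcal{O},\preceq\cap((S\cap p)\times(S\cap p)))$. Anchored conditioning: if $Cond_1(\mathbb{B},p)=(S',\mathcal{O},\preceq')$, then $Cond^+_1(\mathbb{B},p)=(S',\mathcal{O},\preceq')$ if $|\min_{\preceq'}S'|=1$, and otherwise $Cond^+_1(\mathbb{B},p)=(\{x\},\mathcal{O},\emptyset)$ for some (randomly chosen) $x\in\min_{\preceq'}S'$. The anchoring-biased method: $Cond_{AB}(\mathbb{B},\lambda)=\mathbb{B}$ and $Cond_{AB}(\mathbb{B},\sigma\cdot p)=Cond^+_1(Cond_{AB}(\mathbb{B},\sigma),\min_{\preceq_{AB}}(S_{AB}\cap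 p))$, where $Cond_{AB}(\mathbb{B},\sigma)=(S_{AB},\mathcal{O},\preceq_{AB})$. Its conjecture on $\sigma$ is the set of minimal worlds of $Cond_{AB}((S,\mathcal{O},\preceq),\sigma)$ (for a one-world space $\{x\}$ this is $\{x\}$). $\mathbb{S}$ is identifiable in the limit by $Cond_{AB}$ if there is a total preorder $\preceq$ on $S$ such that for every $s\in S$, every stream sound and complete for $s$, and every resolution of the random choices, the conjecture on $\vec O[n]$ is $\{s\}$ for all sufficiently large $n$. *)

(* Defs.v *)
(* Worlds are natural numbers; an epistemic space is a
   non-empty set S of naturals (hence at most countable) together with a
   family O of subsets of S. *)
From Stdlib Require Import List Arith.

Definition wset := nat -> Prop.
Definition subset (X Y : wset) : Prop := forall x, X x -> Y x.

Definition epistemic_space (S : wset) (O : wset -> Prop) : Prop :=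
  (exists s, S s) /\ (forall X, O X -> subset X S).

Definition stream := nat -> wset.
Definition is_stream (O : wset -> Prop) (st : stream) : Prop :=
  forall n, O (st n).
Definition prefix (st : stream) (n : nat) : list wset :=
  map st (seq 0 n).
Definition sound_for (st : stream) (s : nat) : Prop :=
  forall n, st n s.
Definition complete_for (O : wset -> Prop) (st : stream) (s : nat) : Prop :=
  forall X, O X -> X s -> exists n, st n = X.

Definition is_singleton (X : wset) (s : nat) : Prop :=
  forall x, X x <-> x = s.

Definition identifiable (S : wset) (O : wset -> Prop) : Prop :=
  exists L : list wset -> wset,
    forall s, S s ->
    forall st, is_stream O st -> sound_for st s -> complete_for O st s ->
    exists N, forall n, N <= n -> is_singleton (L (prefix st n)) s.

Definition state := (wset * (nat -> nat -> Prop))%type.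

Definition minset (le : nat -> nat -> Prop) (X : wset) : wset :=
  fun x => X x /\ ~ (exists y, X y /\ le y x /\ ~ le x y).

Definition cond1 (b : state) (p : wset) : state :=
  (fun x => fst b x /\ p x,
   fun x y => snd b x y /\ (fst b x /\ p x) /\ (fst b y /\ p y)).

(** One step of anchored conditioning Cond^+_1 (relational, so that every
    resolution of the random choice is allowed): [cond1plus_step b p b']
    means b' is a possible result of Cond^+_1(b, p).  When the set of
    minimal worlds is empty there is nothing to choose and the conditioned
    space is kept. *)
Definition cond1plus_step (b : state) (p : wset) (b' : state) : Prop :=
  let c := cond1 b p in
  let m := minset (snd c) (fst c) in
  ((exists x, m x /\ forall y, m y -> y = x) /\ b' = c)
  \/ ((exists x y, m x /\ m y /\ x <> y) /\
      exists x, m x /\ b' = ((fun z => z = x), (fun _ _ => False)))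
  \/ ((~ exists x, m x) /\ b' = c).

(** One step of the anchoring-biased method:
    Cond_AB(B, sigma.p) = Cond^+_1(Cond_AB(B,sigma), min (S_AB /\ p)). *)
Definition ab_step (b : state) (p : wset) (b' : state) : Prop :=
  cond1plus_step b (minset (snd b) (fun x => fst b x /\ p x)) b'.

(** A run of Cond_AB on a stream, for some resolution of the random choices:
    run n = Cond_AB(B, st[n]). *)
Definition ab_run (b0 : state) (st : stream) (run : nat -> state) : Prop :=
  run 0 = b0 /\ forall n, ab_step (run n) (st n) (run (S n)).

Definition ab_conj (b : state) : wset := minset (snd b) (fst b).

Definition total_preorder_on (S : wset) (le : nat -> nat -> Prop) : Prop :=
  (forall x y, le x y -> S x /\ S y) /\
  (forall x, S x -> le x x) /\
  (forall x y z, le x y -> le y z -> le x z) /\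
  (forall x y, S x -> S y -> le x y \/ le y x).

Definition identifiable_AB (S : wset) (O : wset -> Prop) : Prop :=
  exists le, total_preorder_on S le /\
    forall s, S s ->
    forall st, is_stream O st -> sound_for st s -> complete_for O st s ->
    forall run, ab_run (S, le) st run ->
    exists N, forall n, N <= n -> is_singleton (ab_conj (run n)) s.

(* Main.v *)
Require Import Defs.
From Stdlib Require Import List Arith Lia Classical ClassicalEpsilon.

Definition S2 : wset := fun x => x = 0 \/ x = 1.
Definition Z0 : wset := fun x => x = 0.
Definition O2 (X : wset) : Prop := X = S2 \/ X = Z0.
Definition stA : stream := fun _ => S2.
Definition stB : stream := fun n => match n with 0 => S2 | _ => Z0 end.

Lemma step_ex b p : exists b', ab_step b p b'.
Proof.
  unfold ab_step, cond1plus_step.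
  set (c := cond1 b _). set (m := minset (snd c) (fst c)).
  destruct (classic (exists x, m x)) as [[x Hx]|Hn].
  - destruct (classic (forall y, m y -> y = x)) as [Hu|Hu].
    + exists c. left. split; [exists x; auto|reflexivity].
    + apply not_all_ex_not in Hu. destruct Hu as [y Hy].
      exists ((fun z => z = x), (fun _ _ => False)). right; left.
      split. exists x, y. split; [exact Hx|split]. apply NNPP; intro Hm; apply Hy; intro Hm'; contradiction. intro E; apply Hy; intros _; auto.
      exists x; auto.
  - exists c. right; right. auto.
Qed.

Definition next (b : state) (p : wset) : state :=
  proj1_sig (constructive_indefinite_description _ (step_ex b p)).

Lemma next_spec b p : ab_step b p (next b p).
Proof. unfold next. exact (proj2_sig (constructive_indefinite_description _ (step_ex b p))). Qed.

Fixpoint mk (b0 b1 : state) (st : stream) (n : nat) : state :=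
  match n with
  | 0 => b0
  | S m => match m with 0 => b1 | S _ => next (mk b0 b1 st m) (st m) end
  end.

Lemma mk_run b0 b1 st : ab_step b0 (st 0) b1 -> ab_run b0 st (mk b0 b1 st).
Proof.
  intro H. split; [reflexivity|]. intros [|n]; [exact H|].
  simpl. apply next_spec.
Qed.

Lemma step_sub b p b' : ab_step b p b' -> subset (fst b') (fst b).
Proof.
  unfold ab_step, cond1plus_step. intros [[_ E]|[[_ [x [[[Hx _] _] E]]]|[_ E]]]; subst; simpl.
  - intros x [H _]; auto.
  - intros z ->. auto.
  - intros x [H _]; auto.
Qed.

Lemma run_sub b0 st run : ab_run b0 st run ->
  forall n, 1 <= n -> subset (fst (run n)) (fst (run 1)).
Proof.
  intros [_ Hs] n Hn. induction n as [|n IH]; [lia|].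
  destruct n as [|n]; [intros x H; exact H|].
  intros x H. apply IH; [lia|]. eapply step_sub; [apply Hs|exact H].
Qed.

Lemma refute le s st b1 :
  ab_step (S2, le) (st 0) b1 -> ~ fst b1 s ->
  (forall run, ab_run (S2, le) st run ->
     exists N, forall n, N <= n -> is_singleton (ab_conj (run n)) s) -> False.
Proof.
  intros Hst Hn H. destruct (H _ (mk_run _ _ _ Hst)) as [N HN].
  specialize (HN (S N) ltac:(lia)). destruct (HN s) as [_ H2].
  specialize (H2 eq_refl). destruct H2 as [H2 _].
  apply Hn. apply (run_sub _ _ _ (mk_run _ _ _ Hst) (S N) ltac:(lia)) in H2.
  exact H2.
Qed.

Lemma m_eq (b : state) p x :
  let p' := minset (snd b) (fun x => fst b x /\ p x) in
  let c := cond1 b p' in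
  fst c x -> minset (snd c) (fst c) x.
Proof.
  intros p' c Hx. split; auto. intros [y [Hy [Hyx Hxy]]].
  apply Hxy. destruct Hx as [Hbx Hpx]. destruct Hy as [Hby Hpy].
  destruct Hyx as [Hyx _].
  split; [|split; split; auto].
  apply NNPP. intro Hn. destruct Hpx as [_ Hpx]. apply Hpx.
  exists y. destruct Hpy as [Hpy _]. auto.
Qed.

Definition cS (le : nat -> nat -> Prop) : state :=
  cond1 (S2, le) (minset (snd (S2, le)) (fun x => fst (S2, le) x /\ S2 x)).

Lemma cS_iff le x : fst (cS le) x <-> S2 x /\ (forall y, S2 y -> le y x -> le x y).
Proof.
  unfold cS; simpl. split.
  - intros [Hx [_ Hn]]. split; auto. intros y Hy Hyx. apply NNPP; intro Hxy.
    apply Hn. exists y. auto.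
  - intros [Hx Hm]. split; auto. split; auto. intros [y [[Hy _] [Hyx Hxy]]].
    apply Hxy. auto.
Qed.

Lemma cS_m le x : fst (cS le) x -> minset (snd (cS le)) (fst (cS le)) x.
Proof. intro H. exact (m_eq (S2, le) S2 x H). Qed.

Theorem mainTheorem6 :
  exists (S : wset) (O : wset -> Prop),
    epistemic_space S O /\ identifiable S O /\ ~ identifiable_AB S O.
Proof.
  exists S2, O2. split; [|split].
  - split. exists 0; left; auto.
    intros X [->| ->] x Hx; [exact Hx|left; exact Hx].
  - exists (fun l => fun x => (In Z0 l /\ x = 0) \/ (~ In Z0 l /\ x = 1)).
    intros s Hs st Hstr Hsound Hcomp. destruct Hs as [-> | ->].
    + destruct (Hcomp Z0 (or_intror eq_refl) eq_refl) as [k Hk].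
      exists (S k). intros n Hn x. unfold prefix.
      assert (HI : In Z0 (map st (seq 0 n))).
      { rewrite <- Hk. apply in_map. apply in_seq. lia. }
      split. intros [[_ H]|[H _]]; [exact H|contradiction].
      intros ->. left; auto.
    + exists 0. intros n _ x. unfold prefix.
      assert (HI : ~ In Z0 (map st (seq 0 n))).
      { intro H. apply in_map_iff in H. destruct H as [k [Hk _]].
        specialize (Hsound k). rewrite Hk in Hsound. discriminate Hsound. }
      split. intros [[H _]|[_ H]]; [contradiction|exact H].
      intros ->. right; auto.
  - intros [le [[Hrel [Hrefl [Htrans Htot]]] H]].
    assert (R0 : le 0 0) by (apply Hrefl; left; reflexivity).
    assert (R1 : le 1 1) by (apply Hrefl; right; reflexivity).
    destruct (classic (le 0 1)) as [H01|H01].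
    + assert (HA : S2 1) by (right; auto).
      specialize (H 1 HA stA (fun n => or_introl eq_refl) (fun n => or_intror eq_refl)).
      assert (Hc : complete_for O2 stA 1).
      { intros X [->| ->] HX. exists 0; reflexivity. discriminate HX. }
      specialize (H Hc).
      destruct (classic (le 1 0)) as [H10|H10].
      * apply (refute le 1 stA ((fun z => z = 0), (fun _ _ => False))); [|simpl; discriminate|exact H].
        unfold ab_step, cond1plus_step. right; left. fold (cS le).
        split.
        -- exists 0, 1. split; [|split; [|discriminate]]; apply cS_m; apply cS_iff;
           (split; [first [left; reflexivity | right; reflexivity]|]); intros y [-> | ->] _; auto.
        -- exists 0. split; [|reflexivity]. apply cS_m; apply cS_iff.
           split; [left; auto|]. intros y [-> | ->] _; auto.
      * apply (refute le 1 stA (cS le)); [| |exact H].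
        -- unfold ab_step, cond1plus_step. left. fold (cS le). split; [|reflexivity].
           exists 0. split.
           ++ apply cS_m; apply cS_iff. split; [left; auto|].
              intros y [-> | ->] Hy; [auto|contradiction].
           ++ intros y [Hy _]. apply (proj1 (cS_iff le y)) in Hy. destruct Hy as [[->| ->] Hm]; auto.
              exfalso. apply H10. apply Hm; [left; auto|exact H01].
        -- intro Hy. apply (proj1 (cS_iff le 1)) in Hy. destruct Hy as [_ Hm].
           apply H10. apply Hm; [left; auto|exact H01].
    + assert (H10 : le 1 0).
      { destruct (Htot 0 1) as [E|E]; [left; auto|right; auto|contradiction|exact E]. }
      assert (HA : S2 0) by (left; auto).
      specialize (H 0 HA stB (fun n => match n with 0 => or_introl eq_refl | S _ => or_intror eq_refl end)
                     (fun n => match n with 0 => or_introl eq_refl | S _ => eq_refl end)).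
      assert (Hc : complete_for O2 stB 0).
      { intros X [->| ->] HX. exists 0; reflexivity. exists 1; reflexivity. }
      specialize (H Hc).
      apply (refute le 0 stB (cS le)); [| |exact H].
      -- unfold ab_step, cond1plus_step. left. fold (cS le). split; [|reflexivity].
         exists 1. split.
         ++ apply cS_m; apply cS_iff. split; [right; auto|].
            intros y [-> | ->] Hy; [contradiction|auto].
         ++ intros y [Hy _]. apply (proj1 (cS_iff le y)) in Hy. destruct Hy as [[->| ->] Hm]; auto.
            exfalso. apply H01. apply Hm; [right; auto|exact H10].
      -- intro Hy. apply (proj1 (cS_iff le 0)) in Hy. destruct Hy as [_ Hm].
         apply H01. apply Hm; [right; auto|exact H10].
Qed.
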